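(* For every integer $n\geq 1$, $$\sum_{k=1}^{n-1}B_{2k}\bar B_{2n-2k}=\frac{1}{n+1}\sum_{k=1}^{n}B_{2k}B_{2n-2k}\,\frac{1-2^{2k-1}}{2^{2n-1}}\binom{2n+2}{2k+2}+(2n-1)\frac{B_{2n}}{2^{2n}}.$$
   Context: $B_n$ denotes the Bernoulli numbers, defined by $\frac{x}{e^x-1}=\sum_{n\ge 0}B_n\frac{x^n}{n!}$ (so $B_0=1$). $\bar B_n:=\frac{1-2^{n-1}}{2^{n-1}}B_n$. An empty sum equals $0$. *)

(* Defs.v *)
From mathcomp Require Import all_boot all_order all_algebra.
Set Implicit Arguments. Unset Strict Implicit. Unset Printing Implicit Defensive.
Import Order.TTheory GRing.Theory Num.Theory.
Local Open Scope ring_scope.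

(* Bernoulli numbers with B_0 = 1, B_1 = -1/2 (the convention of x/(e^x-1)),
   computed from the equivalent recurrence
     sum_{k=0}^{n} C(n+1,k) B_k = 0  for n >= 1,
   i.e. B_n = -1/(n+1) * sum_{k<n} C(n+1,k) B_k. *)
Definition bern_next (s : seq rat) : rat :=
  let n := size s in
  if n == 0%N then 1
  else - (n.+1%:R)^-1 * \sum_(k < n) ('C(n.+1, k))%:R * s`_k.

Fixpoint bern_upto (n : nat) : seq rat :=
  match n with
  | 0%N => [::]
  | m.+1 => let s := bern_upto m in rcons s (bern_next s)
  end.

Definition B (n : nat) : rat := (bern_upto n.+1)`_n.

Definition Bbar (n : nat) : rat :=
  (1 - 2 ^+ n.-1) / 2 ^+ n.-1 * B n.

Lemma B0 : B 0 = 1. Proof. by rewrite /B /= /bern_next /=. Qed.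

(* Main.v *)
Require Import Defs.
From mathcomp Require Import all_boot all_order all_algebra.
From mathcomp Require Import ring lra zify.
Import Order.TTheory GRing.Theory Num.Theory.
Local Open Scope ring_scope.

Lemma size_bern_upto n : size (bern_upto n) = n.
Proof. by elim: n => //= n IH; rewrite size_rcons IH. Qed.

Lemma bern_upto_nth m k : (k < m)%N -> (bern_upto m)`_k = B k.
Proof.
elim: m => // m IH; rewrite ltnS leq_eqVlt => /orP[/eqP->|km].
  by [].
rewrite /= nth_rcons size_bern_upto km IH //.
Qed.

Lemma B_rec m : B m = if m == 0%N then 1 else
   - (m.+1%:R)^-1 * \sum_(k < m) ('C(m.+1, k))%:R * B k.
Proof.
rewrite /B /= nth_rcons size_bern_upto ltnn eqxx /bern_next size_bern_upto.
case: eqP => // _; congr (_ * _); apply: eq_bigr => k _.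
by rewrite bern_upto_nth.
Qed.

Lemma B_sum0 m : (1 <= m)%N -> \sum_(k < m.+1) ('C(m.+1, k))%:R * B k = 0.
Proof.
case: m => // m _; rewrite big_ord_recr /= B_rec /=.
rewrite binSn mulrA mulrN mulfV ?pnatr_eq0 // mulN1r subrr //.
Qed.

Definition L (p : {poly rat}) : rat := \sum_(i < size p) p`_i * B i.

Lemma L_sumN (p : {poly rat}) N : (size p <= N)%N -> L p = \sum_(i < N) p`_i * B i.
Proof.
move=> hN; rewrite /L (big_ord_widen N (fun i => p`_i * B i) hN) big_mkcond /=.
apply: eq_bigr => i _; case: ifP => // /negbT; rewrite -leqNgt => hi.
by rewrite nth_default // mul0r.
Qed.

Lemma L_add (p q : {poly rat}) : L (p + q) = L p + L q.
Proof.
set N := maxn (size p) (size q).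
rewrite (L_sumN _ _ (size_add _ _)) (L_sumN _ N (leq_maxl _ _)).
rewrite (L_sumN _ N (leq_maxr _ _)) -big_split /=.
by apply: eq_bigr => i _; rewrite coefD mulrDl.
Qed.

Lemma L_scale a (p : {poly rat}) : L (a *: p) = a * L p.
Proof.
rewrite (L_sumN _ _ (size_scale_leq _ _)) /L mulr_sumr.
by apply: eq_bigr => i _; rewrite coefZ mulrA.
Qed.

Lemma L0 : L 0 = 0.
Proof. by rewrite /L size_poly0 big_ord0. Qed.

Lemma L_opp (p : {poly rat}) : L (- p) = - L p.
Proof. by rewrite -scaleN1r L_scale mulN1r. Qed.

Lemma L_sub (p q : {poly rat}) : L (p - q) = L p - L q.
Proof. by rewrite L_add L_opp. Qed.

Lemma L_sum I (r : seq I) (P : pred I) (F : I -> {poly rat}) :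
  L (\sum_(i <- r | P i) F i) = \sum_(i <- r | P i) L (F i).
Proof. exact: (big_morph L L_add L0). Qed.

Lemma L_Xn n : L 'X^n = B n.
Proof.
rewrite (L_sumN _ n.+1 (eq_leq (size_polyXn _ _ ))) big_ord_recr /= big1 ?add0r.
  by rewrite coefXn eqxx mul1r.
by move=> i _; rewrite coefXn ltn_eqF ?mul0r.
Qed.

Lemma L_XnZ (a : rat) n : L (a *: 'X^n) = a * B n.
Proof. by rewrite L_scale L_Xn. Qed.

Lemma L_XaddC (c : rat) i : L ((c%:P + 'X) ^+ i) = \sum_(j < i.+1) ('C(i, j))%:R * c ^+ (i - j) * B j.
Proof.
rewrite exprDn L_sum; apply: eq_bigr => j _.
rewrite -polyC_exp mul_polyC -scaler_nat scalerA L_XnZ.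
by rewrite mulrC.
Qed.

Lemma poly_ext (p q : {poly rat}) : (forall x, p.[x] = q.[x]) -> p = q.
Proof.
move=> h; apply/eqP; rewrite -subr_eq0; apply/eqP.
apply: (@roots_geq_poly_eq0 _ _ [seq i%:R | i <- iota 0 (size (p - q))]).
- by apply/allP => x /mapP [i _ ->]; rewrite /root hornerD hornerN h subrr.
- by rewrite map_inj_uniq ?iota_uniq // => a b /eqP; rewrite eqr_nat => /eqP.
- by rewrite size_map size_iota.
Qed.

Lemma XaddC1 : ('X + 1 : {poly rat}) = 1%:P + 'X.
Proof. by rewrite addrC polyC1. Qed.

Lemma K1X i : L ('X^i \Po ('X + 1) - 'X^i) = ('X^i)^`().[0].
Proof.
rewrite comp_Xn_poly L_sub XaddC1 L_XaddC L_Xn big_ord_recr /= binn subnn.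
rewrite expr0 mulr1 mul1r addrK derivXn hornerMn hornerXn.
under eq_bigr do rewrite expr1n mulr1.
case: i => [|[|m]]; first by rewrite big_ord0.
  by rewrite big_ord1 bin0 B0 mulr1 expr0.
by rewrite B_sum0 //= expr0n mul0rn.
Qed.

Lemma K1 p : L (p \Po ('X + 1) - p) = p^`().[0].
Proof.
rewrite -[p]coefK poly_def.
have -> : forall q : {poly rat}, q \Po ('X + 1) = comp_poly ('X + 1) q by [].
rewrite !raddf_sum /= -big_split L_sum horner_sum; apply: eq_bigr => i _.
rewrite comp_polyZ.
transitivity (L (p`_i *: ('X^i \Po ('X + 1) - 'X^i))); first by congr L; rewrite scalerBr.
by rewrite L_scale derivZ hornerZ K1X.
Qed.

Definition sh (a : rat) : {poly rat} := 'X + a%:P.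

Lemma comp_sh (p : {poly rat}) a b : (p \Po sh a) \Po sh b = p \Po sh (a + b).
Proof.
by rewrite -comp_polyA /sh comp_polyD comp_polyX comp_polyC -addrA -polyCD (addrC b).
Qed.

Lemma horner_sh (p : {poly rat}) a x : (p \Po sh a).[x] = p.[x + a].
Proof. by rewrite horner_comp /sh hornerD hornerX hornerC. Qed.

Lemma deriv_sh (p : {poly rat}) a : (p \Po sh a)^`() = p^`() \Po sh a.
Proof. by rewrite deriv_comp /sh derivD derivX derivC addr0 mulr1. Qed.

Lemma K1s (p : {poly rat}) : L (p \Po sh 1 - p) = p^`().[0].
Proof. by rewrite /sh polyC1 K1. Qed.

Lemma L_Cmul (c : rat) (r : {poly rat}) n : L (c%:P * r *+ n) = n%:R * c * L r.
Proof. by rewrite mul_polyC -scaler_nat scalerA L_scale. Qed.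

Definition BP m : {poly rat} := \sum_(j < m.+1) ('C(m,j)%:R * B j) *: 'X^(m-j).

Lemma BP_horner m x : (BP m).[x] = L ((x%:P + 'X)^+m).
Proof.
rewrite L_XaddC /BP horner_sum; apply: eq_bigr => j _.
by rewrite hornerZ hornerXn mulrAC.
Qed.

Lemma BP0 m : (BP m).[0] = B m.
Proof. by rewrite BP_horner add0r L_Xn. Qed.

Lemma BP_step m x : (BP m).[x + 1] = (BP m).[x] + m%:R * x ^+ m.-1.
Proof.
rewrite !BP_horner.
have -> : ((x + 1)%:P + 'X) ^+ m = ((x%:P + 'X) ^+ m) \Po sh 1.
  by rewrite rmorphXn /= /sh comp_polyD comp_polyC comp_polyX polyCD addrAC addrA.
apply/eqP; rewrite -subr_eq0 opprD addrA -L_sub K1s subr_eq0.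
rewrite deriv_exp derivD derivC derivX add0r mul1r.
by rewrite hornerMn horner_exp hornerD hornerC hornerX addr0 -mulr_natl.
Qed.

Lemma BP_shift m (y h : rat) :
  (BP m).[y + h] = \sum_(i < m.+1) 'C(m,i)%:R * (BP i).[h] * y ^+ (m - i).
Proof.
rewrite BP_horner.
have -> : (y + h)%:P + 'X = y%:P + (h%:P + 'X) by rewrite polyCD addrA.
rewrite exprDn L_sum; apply: eq_bigr => i _.
by rewrite -polyC_exp L_Cmul BP_horner mulrAC.
Qed.

Lemma BP_deriv m : (BP m)^`() = BP m.-1 *+ m.
Proof.
rewrite /BP raddf_sum /=.
case: m => [|k]; first by rewrite big_ord1 derivZ derivXn /= mulr0n scaler0 mulr0n.
rewrite big_ord_recr /= subnn derivZ derivXn mulr0n scaler0 addr0 -sumrMnl.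
apply: eq_bigr => j _.
rewrite derivZ derivXn -!scaler_nat !scalerA; congr (_ *: _); last first.
  by rewrite subSn ?leq_ord.
by rewrite mulrC mulrA -natrM -mul_bin_down /= natrM mulrA.
Qed.

Definition hf : rat := 2^-1.

Definition U N : {poly rat} := \sum_(k < N.+1) BP k * (BP (N - k) \Po sh hf).

Lemma U_deriv N : (U N.+1)^`() = U N *+ N.+2.
Proof.
rewrite /U raddf_sum /=.
under eq_bigr do rewrite derivM deriv_sh !BP_deriv.
rewrite big_split /= big_ord_recl /= mulr0n mul0r add0r.
rewrite [X in _ + X]big_ord_recr /= subnn mulr0n comp_poly0 mulr0 addr0.
rewrite -sumrMnl -big_split /=; apply: eq_bigr => i _.
rewrite /bump /= add0n add1n subSS subSn ?leq_ord //= raddfMn /=.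
rewrite mulrnAl mulrnAr -mulrnDr; congr (_ *+ _).
by rewrite addSn addnS addnC subnK // -ltnS.
Qed.

Lemma half2 : hf + hf = 1.
Proof. by rewrite /hf; field. Qed.

Lemma U_horner N x : (U N).[x] = \sum_(k<N.+1) (BP k).[x] * (BP (N-k)).[x + hf].
Proof. by rewrite /U horner_sum; apply: eq_bigr => k _; rewrite hornerM horner_sh. Qed.

Lemma DhU_horner N x : (U N \Po sh hf - U N).[x] =
  \sum_(k<N.+1) (BP k).[x + hf] * ((N-k)%:R * x ^+ (N-k).-1).
Proof.
rewrite hornerD hornerN horner_sh !U_horner -addrA half2.
under eq_bigr do rewrite BP_step mulrDr.
rewrite big_split /= -addrA addrCA [X in _ + X](_ : _ = 0) ?addr0 //.
apply/eqP; rewrite subr_eq0; apply/eqP.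
rewrite (reindex_inj rev_ord_inj) /=; apply: eq_bigr => k _.
by rewrite subKn ?leq_ord // mulrC.
Qed.

Lemma hockey N i : (\sum_(k < N.+1) 'C(k, i) = 'C(N.+1, i.+1))%N.
Proof.
elim: N => [|N IH]; first by rewrite big_ord1; case: i.
by rewrite big_ord_recr /= IH.
Qed.

Lemma comb_sum N i : (\sum_(k < N.+1) (N - k) * 'C(k, i) = 'C(N.+1, i.+2))%N.
Proof.
elim: N => [|N IH]; first by rewrite big_ord1 mul0n bin_small.
rewrite big_ord_recr /= subnn mul0n addn0.
have -> : (\sum_(k < N.+1) (N.+1 - k) * 'C(k, i) =
   \sum_(k < N.+1) (N - k) * 'C(k, i) + \sum_(k < N.+1) 'C(k, i))%N.
  rewrite -big_split /=; apply: eq_bigr => k _.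
  by rewrite subSn ?leq_ord // mulSn addnC.
by rewrite IH hockey binS.
Qed.

Definition E N : {poly rat} :=
  \sum_(i < N.+1) ('C(N.+1, i.+2)%:R * (BP i).[hf]) *: 'X^(N.-1 - i).

Lemma E_horner N x : (E N).[x] =
  \sum_(i < N.+1) 'C(N.+1, i.+2)%:R * (BP i).[hf] * x ^+ (N.-1 - i).
Proof. by rewrite /E horner_sum; apply: eq_bigr => i _; rewrite hornerZ hornerXn. Qed.

Lemma widen_bin N k (G : nat -> rat) : (k <= N)%N ->
  \sum_(i < k.+1) 'C(k,i)%:R * G i = \sum_(i < N.+1) 'C(k,i)%:R * G i.
Proof.
move=> hk; rewrite (big_ord_widen N.+1 (fun i => 'C(k,i)%:R * G i)) ?ltnS //.
rewrite big_mkcond /=; apply: eq_bigr => i _; case: ifP => // /negbT.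
by rewrite -leqNgt => hi; rewrite bin_small ?mul0r.
Qed.

Lemma DhU_E N : U N \Po sh hf - U N = E N.
Proof.
apply: poly_ext => x; rewrite DhU_horner E_horner.
have step : forall k : 'I_N.+1, (BP k).[x + hf] * ((N - k)%:R * x ^+ (N - k).-1) =
   \sum_(i < N.+1) 'C(k,i)%:R * ((BP i).[hf] * x ^+ (k - i)) * ((N - k)%:R * x ^+ (N - k).-1).
  move=> k; rewrite -mulr_suml; congr (_ * _).
  rewrite BP_shift; under eq_bigr do rewrite -mulrA.
  exact: (@widen_bin N k (fun i => (BP i).[hf] * x ^+ (k - i)) (leq_ord k)).
under eq_bigr do rewrite step.
rewrite exchange_big /=; apply: eq_bigr => i _.
rewrite -comb_sum natr_sum !mulr_suml; apply: eq_bigr => k _.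
have [ki|] := ltnP k i.
  by rewrite bin_small // muln0 !mul0r.
move=> ik; have [kN|] := ltnP k N; last first.
  move=> Nk; have -> : (N - k = 0)%N by apply/eqP; rewrite subn_eq0 -ltnS.
  by rewrite mul0n !mul0r mulr0.
have -> : (N.-1 - i = (k - i) + (N - k).-1)%N by lia.
rewrite exprD natrM; ring.
Qed.

Definition L2 (p : {poly rat}) := L (p \Po (hf *: 'X)).

Lemma L2_add p q : L2 (p + q) = L2 p + L2 q.
Proof. by rewrite /L2 comp_polyD L_add. Qed.
Lemma L2_scale a p : L2 (a *: p) = a * L2 p.
Proof. by rewrite /L2 comp_polyZ L_scale. Qed.
Lemma L2_0 : L2 0 = 0.
Proof. by rewrite /L2 comp_poly0 L0. Qed.
Lemma L2_sub p q : L2 (p - q) = L2 p - L2 q.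
Proof. by rewrite /L2 comp_polyB L_sub. Qed.
Lemma L2_sum I (r : seq I) (P : pred I) (F : I -> {poly rat}) :
  L2 (\sum_(i <- r | P i) F i) = \sum_(i <- r | P i) L2 (F i).
Proof. exact: (big_morph L2 L2_add L2_0). Qed.
Lemma L2_XnZ a e : L2 (a *: 'X^e) = a * (hf ^+ e * B e).
Proof. by rewrite L2_scale /L2 comp_Xn_poly exprZn L_XnZ. Qed.

Lemma K2 p : L2 (p \Po sh hf - p) = p^`().[0] * hf.
Proof.
rewrite L2_sub /L2 -comp_polyA.
have -> : sh hf \Po (hf *: 'X) = (hf *: 'X) \Po sh 1.
  rewrite /sh comp_polyD comp_polyX comp_polyC comp_polyZ comp_polyX.
  by rewrite scalerDr polyC1 alg_polyC.
rewrite (comp_polyA p) -L_sub K1s deriv_comp hornerM derivZ derivX horner_comp.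
by rewrite !hornerZ hornerX hornerC mulr0 mulr1.
Qed.

Lemma mainG M :
  (M.+2)%:R * \sum_(k < M.+1) B k * (BP (M - k)).[hf] =
  2 * \sum_(i < M.+2) 'C(M.+2, i.+2)%:R * (BP i).[hf] * (hf ^+ (M - i) * B (M - i)).
Proof.
have := K2 (U M.+1); rewrite DhU_E U_deriv /E L2_sum.
under eq_bigr do rewrite L2_XnZ.
rewrite hornerMn U_horner => ->.
have -> : \sum_(k < M.+1) (BP k).[0] * (BP (M - k)).[0 + hf] =
  \sum_(k < M.+1) B k * (BP (M - k)).[hf] by apply: eq_bigr => k _; rewrite BP0 add0r.
by rewrite -mulr_natl /hf; field.
Qed.

Definition d (q : {poly rat}) := q \Po sh 1 - q.

Lemma Delta_BP m : d (BP m.+1) = (m.+1)%:R *: 'X^m.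
Proof.
apply: poly_ext => x; rewrite /d hornerD hornerN horner_sh BP_step hornerZ hornerXn.
by rewrite addrAC subrr add0r.
Qed.

Lemma vanish (N : {poly rat} -> rat) :
  (forall a p, N (a *: p) = a * N p) -> (forall q, N (d q) = 0) -> forall m, N 'X^m = 0.
Proof.
move=> hs hd m.
have -> : 'X^m = (m.+1%:R)^-1 *: d (BP m.+1).
  by rewrite Delta_BP scalerA mulVf ?pnatr_eq0 // scale1r.
by rewrite hs hd mulr0.
Qed.

Lemma d_sh q a : d q \Po sh a = d (q \Po sh a).
Proof. by rewrite /d comp_polyB !comp_sh (addrC 1). Qed.

Lemma L_d q : L (d q) = q^`().[0].
Proof. exact: K1s. Qed.

Lemma BPhf m : (BP m).[hf] = (2 * hf ^+ m - 1) * B m.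
Proof.
pose Mf p := L p + L (p \Po sh hf) - 2 * L2 p.
have hs : forall a p, Mf (a *: p) = a * Mf p.
  by move=> a p; rewrite /Mf comp_polyZ !L_scale L2_scale; ring.
have hd : forall q, Mf (d q) = 0.
  move=> q; rewrite /Mf d_sh !L_d deriv_sh horner_sh add0r.
  have -> : d q = (q \Po sh hf - q) + (((q \Po sh hf) \Po sh hf) - (q \Po sh hf)).
    by rewrite comp_sh half2 /d [in RHS]addrC [in RHS]addrA subrK.
  by rewrite L2_add !K2 deriv_sh horner_sh add0r /hf; field.
have := vanish _ hs hd m; rewrite /Mf L_Xn (_ : L2 'X^m = hf^+m * B m); last first.
  by rewrite -[X in L2 X]scale1r L2_XnZ mul1r.
rewrite comp_Xn_poly /sh (addrC 'X) -BP_horner => h.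
by apply/eqP; rewrite -subr_eq0 -h; apply/eqP; ring.
Qed.

Lemma B_odd m : odd m -> (1 < m)%N -> B m = 0.
Proof.
move=> om m1.
pose Rf p := L (p \Po (- 'X)) - L (p \Po sh 1).
have hs : forall a p, Rf (a *: p) = a * Rf p.
  by move=> a p; rewrite /Rf !comp_polyZ !L_scale; ring.
have hd : forall q, Rf (d q) = 0.
  move=> q; rewrite /Rf d_sh L_d deriv_sh horner_sh add0r.
  pose w := q \Po (- 'X + 1%:P).
  have e1 : d q \Po (- 'X) = w - (w \Po sh 1).
    rewrite /d comp_polyB; congr (_ - _).
      by rewrite -comp_polyA /sh comp_polyD comp_polyX comp_polyC.
    by rewrite /w -comp_polyA /sh comp_polyD raddfN /= comp_polyX comp_polyC opprD subrK.
  rewrite e1 L_sub.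
  have -> : L w - L (w \Po sh 1) = - L (d w) by rewrite /d L_sub opprB.
  rewrite L_d /w deriv_comp derivD derivN derivX derivC addr0 hornerM hornerN hornerC.
  by rewrite horner_comp hornerD hornerN hornerX hornerC oppr0 add0r mulrN1 opprK subrr.
have e2 : L ('X^m \Po sh 1) = B m.
  have := L_d 'X^m; rewrite /d L_sub L_Xn derivXn hornerMn hornerXn expr0n.
  have -> : (m.-1 == 0%N) = false by case: m m1 om => [|[]].
  by rewrite mul0rn => /eqP; rewrite subr_eq0 => /eqP.
have e3 : L ('X^m \Po - 'X) = - B m.
  by rewrite comp_Xn_poly exprNn -signr_odd om expr1 mulN1r L_opp L_Xn.
have := vanish _ hs hd m; rewrite /Rf e2 e3 => h.
lra.
Qed.

Lemma sum_pairs (F : nat -> rat) n :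
  \sum_(k < 2 * n) F k = \sum_(i < n) (F (2 * i)%N + F (2 * i).+1).
Proof.
elim: n => [|n IH]; first by rewrite !big_ord0.
rewrite [RHS]big_ord_recr /= -IH.
have -> : (2 * n.+1 = (2 * n).+2)%N by lia.
by rewrite !big_ord_recr /= addrA.
Qed.

Lemma sum_parity (F : nat -> rat) n :
  \sum_(k < (2 * n).+1) F k = \sum_(i < n.+1) F (2 * i)%N + \sum_(i < n) F (2 * i).+1.
Proof.
rewrite big_ord_recr /= sum_pairs big_split /= big_ord_recr /=.
by rewrite addrAC.
Qed.

Lemma sum_parity2 (F : nat -> rat) n :
  \sum_(k < (2 * n).+2) F k = \sum_(i < n.+1) F (2 * i)%N + \sum_(i < n.+1) F (2 * i).+1.
Proof.
have -> : ((2 * n).+2 = 2 * n.+1)%N by lia.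
by rewrite sum_pairs big_split.
Qed.

Lemma cOdd m : odd m -> (BP m).[hf] = 0.
Proof.
move=> om; rewrite BPhf.
case: m om => [//|[|m]] om.
  by rewrite expr1 /hf mulfV // subrr mul0r.
by rewrite B_odd // mulr0.
Qed.

Lemma cBbar m : (0 < m)%N -> (BP m).[hf] = Bbar m.
Proof.
case: m => // m _; rewrite BPhf /Bbar /= /hf exprVn exprS.
by field; rewrite expf_neq0.
Qed.

Lemma c0 : (BP 0).[hf] = 1.
Proof. by rewrite BPhf B0 expr0 mulr1 mulr1; field. Qed.

Theorem mainTheorem10 (n : nat) (hn : (1 <= n)%N) :
  \sum_(1 <= k < n) B (2 * k) * Bbar (2 * n - 2 * k)
  = (n.+1%:R)^-1 *
      \sum_(1 <= k < n.+1)
        B (2 * k) * B (2 * n - 2 * k)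
        * ((1 - 2 ^+ (2 * k).-1) / 2 ^+ (2 * n).-1)
        * ('C(2 * n + 2, 2 * k + 2))%:R
    + (2 * n).-1%:R * (B (2 * n) / 2 ^+ (2 * n)).
Proof.
have G := mainG (2 * n).
rewrite (sum_parity (fun k => B k * (BP (2 * n - k)).[hf])) in G.
rewrite (sum_parity2 (fun i => 'C((2 * n).+2, i.+2)%:R * (BP i).[hf] *
   (hf ^+ (2 * n - i) * B (2 * n - i)))) in G.
rewrite [X in _ * (_ + X)]big1 ?addr0 in G; last first.
  move=> i _; rewrite cOdd ?mulr0 // oddB; last by have := ltn_ord i; lia.
  by rewrite /= !oddM.
rewrite [X in _ = _ * (_ + X)]big1 ?addr0 in G; last first.
  by move=> i _; rewrite cOdd ?mulr0 ?mul0r // /= oddM.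
case: n hn G => [//|p] _ G.
set N := p.+1 in G *.
have termE : forall k : nat, (0 < k)%N -> (k <= N)%N ->
  'C((2 * N).+2, (2 * k).+2)%:R * (BP (2 * k)).[hf] *
       (hf ^+ (2 * N - 2 * k) * B (2 * N - 2 * k)) =
  B (2 * k) * B (2 * N - 2 * k) *
     ((1 - 2 ^+ (2 * k).-1) / 2 ^+ (2 * N).-1) * ('C(2 * N + 2, 2 * k + 2))%:R.
  move=> k k0 kN.
  have e1 : (2:rat) ^+ (2 * N).-1 = 2 ^+ (2 * k).-1 * 2 ^+ (2 * N - 2 * k).
    by rewrite -exprD; congr (_ ^+ _); lia.
  have e2 : (2:rat) ^+ (2 * k) = 2 * 2 ^+ (2 * k).-1.
    by rewrite -exprS; congr (_ ^+ _); lia.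
  rewrite BPhf /hf !exprVn e1 e2 !addn2.
  by field; rewrite ?expf_neq0.
rewrite big_add1 big_mkord [in RHS]big_add1 big_mkord.
rewrite big_ord_recl [in RHS]big_ord_recl in G.
have eR : \sum_(i < N)
        'C((2 * N).+2, (2 * lift ord0 i).+2)%:R * (BP (2 * lift ord0 i)).[hf] *
        (hf ^+ (2 * N - 2 * lift ord0 i) * B (2 * N - 2 * lift ord0 i)) =
   \sum_(i < N.+1.-1)
     B (2 * i.+1) * B (2 * N - 2 * i.+1) *
     ((1 - 2 ^+ (2 * i.+1).-1) / 2 ^+ (2 * N).-1) *
     'C(2 * N + 2, 2 * i.+1 + 2)%:R.
  by apply: eq_bigr => i _; rewrite lift0 termE // ltn_ord.
have eL : \sum_(i < N) B (2 * lift ord0 i) * (BP (2 * N - 2 * lift ord0 i)).[hf] =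
   \sum_(i < N.-1) B (2 * i.+1) * Bbar (2 * N - 2 * i.+1) + B (2 * N) * (BP 0).[hf].
  rewrite big_ord_recr /= subnn; congr (_ + _).
  apply: eq_bigr => i _; rewrite /bump leq0n add1n cBbar //.
  by have := ltn_ord i; rewrite /N; lia.
rewrite eR eL /= !muln0 subn0 c0 B0 BPhf in G.
set M := \sum_(i < N.-1) _ in G *.
set T := \sum_(i < N.+1.-1) _ in G *.
have hC : 'C((2 * N).+2, 2) = (N.+1 * (2 * N).+1)%N.
  rewrite bin2 (_ : ((2 * N).+2 * (2 * N).+2.-1 = (N.+1 * (2 * N).+1).*2)%N) ?doubleK //.
  rewrite -mul2n; lia.
have hP : ((2 * N).-1)%:R = 2 * N%:R - 1 :> rat.
  have h : (2 * N = (2 * N).-1 + 1)%N by rewrite /N; lia.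
  by rewrite -natrM [in RHS]h natrD addrK.
have e3 : ((2 * N).+2)%:R = 2 * (N.+1)%:R :> rat.
  by rewrite -natrM; congr (_%:R); lia.
have e4 : ((2 * N).+1)%:R = 2 * N%:R + 1 :> rat.
  by rewrite -natrM natr1.
have x0 : ((2 * N).+2)%:R != 0 :> rat by rewrite pnatr_eq0.
have hM : M = (2 * ('C((2 * N).+2, 2)%:R * 1 * (hf ^+ (2 * N) * B (2 * N)) + T))
   / ((2 * N).+2)%:R - ((2 * hf ^+ (2 * N) - 1) * B (2 * N)) - B (2 * N).
  rewrite -G; field.
  have h0 : (0:rat) <= N%:R by rewrite ler0n.
  by apply/eqP => h; lra.
rewrite hM hC hP natrM e3 e4 -(natr1 N) /hf exprVn.
field.
by rewrite expf_neq0 // natr1 pnatr_eq0.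
Qed.
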